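(* Let $\mathbb X,\mathbb Y$ be Euclidean spaces, $\Phi\colon\mathbb X\rightrightarrows\mathbb Y$ with closed graph, $(\bar x,\bar y)\in\operatorname{gph}\Phi$, $u\in\mathbb S_{\mathbb X}$ and $\gamma>1$. Assume $A^\gamma(u)$ holds, i.e., $\ker D^*_\gamma\Phi((\bar x,\bar y);(u,0))\subset\{0\}$ and for all $\alpha,\beta\ge0$ $$\widetilde D^*_\gamma\Phi((\bar x,\bar y);(u,0))(0)\cup\bigcup_{w\in\mathbb S_{\mathbb Y}}D^*_\gamma\Phi((\bar x,\bar y);(u,\alpha w))(\beta w)\subset\operatorname{Im}D^*\Phi(\bar x,\bar y).$$ Then $\Phi$ is asymptotically regular at $(\bar x,\bar y)$ in direction $u$.
   Context: Pseudo-coderivative of order $\gamma$ ($u\in\mathbb S_{\mathbb X}$, $v\in\mathbb Y$): $x^*\in D^*_\gamma\Phi((\bar x,\bar y);(u,v))(y^* )$ iff there are $u_k\to u$, $v_k\to v$, $t_k\downarrow0$, $x_k^*\to x^*$, $y_k^*\to y^*$ with $(x_k^*,-y_k^*/(t_k\|u_k\|)^{\gamma-1})\in\widehat{\mathcal N}_{\operatorname{gph}\Phi}(\bar x+t_ku_k,\bar y+(t_k\|u_k\|)^\gamma v_k)$ for all $k$; Gfrerer's pseudo-coderivative $\widetilde D^*_\gamma$ uses instead the point $(\bar x+t_ku_k,\bar y+t_kv_k)$. $\ker\Psi=\{y^*\mid0\in\Psi(y^* )\}$. $D^*\Phi(x,y)(y^* )=\{x^*\mid(x^*,-y^* )\in\mathcal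 N_{\operatorname{gph}\Phi}(x,y)\}$, $\widehat D^*$ the same with the regular normal cone $\widehat{\mathcal N}$, $\operatorname{Im}D^*\Phi(\bar x,\bar y)=\bigcup_{y^*}D^*\Phi(\bar x,\bar y)(y^* )$. Asymptotic regularity in direction $u$: for all $(x_k,y_k)\in\operatorname{gph}\Phi$, $x_k^*$, $\lambda_k$, $x^*$, $y^*$ with $x_k\notin\Phi^{-1}(\bar y)$, $y_k\ne\bar y$, $x_k^*\in\widehat D^*\Phi(x_k,y_k)(\lambda_k)$ for all $k$ and $x_k\to\bar x$, $y_k\to\bar y$, $x_k^*\to x^*$, $\frac{x_k-\bar x}{\|x_k-\bar x\|}\to u$, $\frac{y_k-\bar y}{\|x_k-\bar x\|}\to0$, $\frac{\|y_k-\bar y\|}{\|x_k-\bar x\|}\lambda_k\to y^*$, $\|\lambda_k\|\to\infty$, $\frac{y_k-\bar y}{\|y_k-\bar y\|}-\frac{\lambda_k}{\|\lambda_k\|}\to0$, one has $x^*\in\operatorname{Im}D^*\Phi(\bar x,\bar y)$. *)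

(* Defs.v *)
From mathcomp Require Import all_boot all_order all_algebra.
From mathcomp Require Import all_classical all_reals exp.
Set Implicit Arguments. Unset Strict Implicit. Unset Printing Implicit Defensive.
Import Order.TTheory GRing.Theory Num.Theory.
Local Open Scope ring_scope.
Local Open Scope classical_set_scope.

Section Defs.
Variable R : realType.

Definition dotv n (u v : 'rV[R]_n) : R := \sum_(i < n) u 0 i * v 0 i.
Definition enorm n (u : 'rV[R]_n) : R := Num.sqrt (dotv u u).
Definition pnorm n m (a : 'rV[R]_n) (b : 'rV[R]_m) : R :=
  Num.sqrt (dotv a a + dotv b b).

Definition vcvg n (x : nat -> 'rV[R]_n) (l : 'rV[R]_n) : Prop :=
  forall e : R, 0 < e -> exists N : nat, forall k, (N <= k)%N -> enorm (x k - l) < e.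
Definition rcvg (t : nat -> R) (l : R) : Prop :=
  forall e : R, 0 < e -> exists N : nat, forall k, (N <= k)%N -> `|t k - l| < e.
Definition rdiv_pinfty (t : nat -> R) : Prop :=
  forall M : R, exists N : nat, forall k, (N <= k)%N -> M < t k.

(* set-valued map Phi : X ==> Y, gph Phi = [set (x,y) | Phi x y] *)
Definition closed_graph n m (Phi : 'rV[R]_n -> set 'rV[R]_m) : Prop :=
  forall (xk : nat -> 'rV[R]_n) (yk : nat -> 'rV[R]_m) x y,
    (forall k, Phi (xk k) (yk k)) -> vcvg xk x -> vcvg yk y -> Phi x y.

Definition reg_normal n m (Phi : 'rV[R]_n -> set 'rV[R]_m) x y xs ys : Prop :=
  Phi x y /\
  forall e : R, 0 < e -> exists d : R, 0 < d /\
    forall x' y', Phi x' y' -> pnorm (x' - x) (y' - y) < d ->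
      dotv xs (x' - x) + dotv ys (y' - y) <= e * pnorm (x' - x) (y' - y).

Definition lim_normal n m (Phi : 'rV[R]_n -> set 'rV[R]_m) x y xs ys : Prop :=
  exists (xk : nat -> 'rV[R]_n) (yk : nat -> 'rV[R]_m)
         (xsk : nat -> 'rV[R]_n) (ysk : nat -> 'rV[R]_m),
    (forall k, reg_normal Phi (xk k) (yk k) (xsk k) (ysk k)) /\
    vcvg xk x /\ vcvg yk y /\ vcvg xsk xs /\ vcvg ysk ys.

Definition coderiv n m (Phi : 'rV[R]_n -> set 'rV[R]_m) x y (ys : 'rV[R]_m)
  : set 'rV[R]_n := [set xs | lim_normal Phi x y xs (- ys)].
Definition reg_coderiv n m (Phi : 'rV[R]_n -> set 'rV[R]_m) x y (ys : 'rV[R]_m)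
  : set 'rV[R]_n := [set xs | reg_normal Phi x y xs (- ys)].
Definition Im_coderiv n m (Phi : 'rV[R]_n -> set 'rV[R]_m) x y : set 'rV[R]_n :=
  [set xs | exists ys, coderiv Phi x y ys xs].

Definition ker n m (Psi : 'rV[R]_m -> set 'rV[R]_n) : set 'rV[R]_m :=
  [set ys | Psi ys 0].

Definition pcoderiv (gamma : R) n m (Phi : 'rV[R]_n -> set 'rV[R]_m)
  (xb : 'rV[R]_n) (yb : 'rV[R]_m) (u : 'rV[R]_n) (v : 'rV[R]_m)
  (ys : 'rV[R]_m) : set 'rV[R]_n :=
  [set xs | exists (uk : nat -> 'rV[R]_n) (vk : nat -> 'rV[R]_m) (tk : nat -> R)
      (xsk : nat -> 'rV[R]_n) (ysk : nat -> 'rV[R]_m),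
    vcvg uk u /\ vcvg vk v /\ (forall k, 0 < tk k) /\ rcvg tk 0 /\
    vcvg xsk xs /\ vcvg ysk ys /\
    forall k, reg_normal Phi (xb + tk k *: uk k)
      (yb + ((tk k * enorm (uk k)) `^ gamma) *: vk k)
      (xsk k) (- (((tk k * enorm (uk k)) `^ (gamma - 1))^-1 *: ysk k))].

Definition gpcoderiv (gamma : R) n m (Phi : 'rV[R]_n -> set 'rV[R]_m)
  (xb : 'rV[R]_n) (yb : 'rV[R]_m) (u : 'rV[R]_n) (v : 'rV[R]_m)
  (ys : 'rV[R]_m) : set 'rV[R]_n :=
  [set xs | exists (uk : nat -> 'rV[R]_n) (vk : nat -> 'rV[R]_m) (tk : nat -> R)
      (xsk : nat -> 'rV[R]_n) (ysk : nat -> 'rV[R]_m),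
    vcvg uk u /\ vcvg vk v /\ (forall k, 0 < tk k) /\ rcvg tk 0 /\
    vcvg xsk xs /\ vcvg ysk ys /\
    forall k, reg_normal Phi (xb + tk k *: uk k) (yb + tk k *: vk k)
      (xsk k) (- (((tk k * enorm (uk k)) `^ (gamma - 1))^-1 *: ysk k))].

Definition asymp_regular n m (Phi : 'rV[R]_n -> set 'rV[R]_m)
  (xb : 'rV[R]_n) (yb : 'rV[R]_m) (u : 'rV[R]_n) : Prop :=
  forall (xk : nat -> 'rV[R]_n) (yk : nat -> 'rV[R]_m) (xsk : nat -> 'rV[R]_n)
         (lk : nat -> 'rV[R]_m) (xs : 'rV[R]_n) (ys : 'rV[R]_m),
    (forall k, Phi (xk k) (yk k)) ->
    (forall k, ~ Phi (xk k) yb) ->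
    (forall k, yk k <> yb) ->
    (forall k, reg_coderiv Phi (xk k) (yk k) (lk k) (xsk k)) ->
    vcvg xk xb -> vcvg yk yb -> vcvg xsk xs ->
    vcvg (fun k => (enorm (xk k - xb))^-1 *: (xk k - xb)) u ->
    vcvg (fun k => (enorm (xk k - xb))^-1 *: (yk k - yb)) 0 ->
    vcvg (fun k => (enorm (yk k - yb) / enorm (xk k - xb)) *: lk k) ys ->
    rdiv_pinfty (fun k => enorm (lk k)) ->
    vcvg (fun k => (enorm (yk k - yb))^-1 *: (yk k - yb)
                   - (enorm (lk k))^-1 *: lk k) 0 ->
    Im_coderiv Phi xb yb xs.

End Defs.

(* Main.v *)
Require Import Defs.
From mathcomp Require Import all_boot all_order all_algebra.
From mathcomp Require Import all_classical all_reals exp.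
From mathcomp Require Import topology normedtype sequences realfun.
From mathcomp Require Import ring lra.
Import Order.TTheory GRing.Theory Num.Theory numFieldNormedType.Exports.
Set Implicit Arguments. Unset Strict Implicit. Unset Printing Implicit Defensive.
Local Open Scope ring_scope.
Local Open Scope classical_set_scope.
Section Aux.
Variable R : realType.

Lemma rcvgE (t : nat -> R) l : rcvg t l <-> t n @[n --> \oo] --> l.
Proof.
split.
- move=> H; apply/cvgrPdist_lt => e e0.
  have [N HN] := H e e0; exists N => // k /= Nk.
  by rewrite distrC; apply: HN.
- move/cvgrPdist_lt => H e e0.
  have [N _ HN] := H e e0; exists N => k Nk.
  by rewrite distrC; apply: HN.
Qed.

Lemma BWr (t : nat -> R) M : (forall k, `|t k| <= M) ->
  exists f : nat -> nat, (forall k, (f k < f k.+1)%N) /\ exists l, rcvg (t \o f) l.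
Proof.
move=> HM.
have : bounded_fun t.
  exists M; split; first by rewrite num_real.
  move=> x Mx y _; apply: le_trans (HM y) _; exact: ltW.
move=> /bolzano_weierstrass [f incf cf].
exists f; split.
  by move=> k; have := incf k.+1 k; rewrite ltnn => /negbT; rewrite -ltNge.
move/cvg_ex: cf => [l Hl]; exists l; exact/rcvgE.
Qed.
Lemma rcvg_sum (I : finType) (f : I -> nat -> R) (a : I -> R) :
  (forall i, rcvg (f i) (a i)) -> rcvg (fun k => \sum_i f i k) (\sum_i a i).
Proof.
move=> H; apply/rcvgE; apply: cvg_big => //.
  exact: add_continuous.
by move=> i _; apply/rcvgE.
Qed.

Lemma dotv_ge0 m (v : 'rV[R]_m) : 0 <= dotv v v.
Proof. by apply: sumr_ge0 => i _; rewrite -expr2 sqr_ge0. Qed.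

Lemma enorm_ge0 m (v : 'rV[R]_m) : 0 <= enorm v.
Proof. exact: sqrtr_ge0. Qed.

Lemma coord_le m (v : 'rV[R]_m) i : `|v 0 i| <= enorm v.
Proof.
rewrite /enorm -sqrtr_sqr ler_sqrt; last exact: dotv_ge0.
rewrite /dotv (bigD1 i) //= expr2 lerDl.
by apply: sumr_ge0 => j _; rewrite -expr2 sqr_ge0.
Qed.

Lemma enormZ m a (v : 'rV[R]_m) : enorm (a *: v) = `|a| * enorm v.
Proof.
rewrite /enorm /dotv.
have -> : \sum_(i < m) (a *: v) 0 i * (a *: v) 0 i = a ^+ 2 * \sum_(i < m) v 0 i * v 0 i.
  rewrite mulr_sumr; apply: eq_bigr => i _; rewrite !mxE; ring.
by rewrite sqrtrM ?sqr_ge0 // sqrtr_sqr.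
Qed.

Lemma enorm0 m : enorm (0 : 'rV[R]_m) = 0.
Proof.
rewrite /enorm /dotv big1 ?sqrtr0 // => i _; by rewrite mxE mulr0.
Qed.

Lemma enorm_eq0 m (v : 'rV[R]_m) : enorm v = 0 -> v = 0.
Proof.
move=> H; apply/rowP => i; rewrite mxE.
by apply/normr0_eq0/eqP; rewrite eq_le normr_ge0 andbT -H coord_le.
Qed.

Lemma vcvgP m (x : nat -> 'rV[R]_m) l :
  vcvg x l <-> forall i, rcvg (fun k => x k 0 i) (l 0 i).
Proof.
split.
- move=> H i e e0; have [N HN] := H e e0; exists N => k Nk.
  apply: le_lt_trans (HN k Nk); have := coord_le (x k - l) i.
  by rewrite !mxE.
- move=> H e e0.
  pose d := e / (m.+1)%:R.
  have d0 : 0 < d by rewrite divr_gt0 // ltr0n.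
  have /boolp.choice [N HN] : forall i, exists N, forall k, (N <= k)%N -> `|x k 0 i - l 0 i| < d.
    by move=> i; exact: H.
  exists (\max_i N i) => k Nk.
  rewrite /enorm -(ger0_norm (ltW e0)) -sqrtr_sqr ltr_sqrt ?exprn_gt0 //.
  apply: (@le_lt_trans _ _ (\sum_(i < m) d * d)).
    apply: ler_sum => i _; rewrite !mxE.
    have := HN i k (leq_trans (leq_bigmax i) Nk); rewrite ltr_norml => /andP[h1 h2].
    nra.
  rewrite sumr_const card_ord.
  have -> : e = d * (m.+1)%:R by rewrite /d divfK // pnatr_eq0.
  rewrite -mulr_natr -natr1.
  have : 0 <= (m%:R : R) by rewrite ler0n.
  nra.
Qed.

Definition incr (f : nat -> nat) := forall k, (f k < f k.+1)%N.

Lemma incr_ge f : incr f -> forall k, (k <= f k)%N.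
Proof.
move=> H; elim=> [|k IH] //; exact: leq_ltn_trans IH (H k).
Qed.

Lemma incr_comp f g : incr f -> incr g -> incr (fun k => f (g k)).
Proof.
move=> Hf Hg k.
have mono : forall a b, (a < b)%N -> (f a < f b)%N.
  move=> a b; elim: b => // b IH; rewrite ltnS leq_eqVlt => /orP[/eqP->|/IH h].
    exact: Hf.
  exact: ltn_trans h (Hf b).
exact: mono (Hg k).
Qed.

Lemma incr_shift N : incr (fun k => (k + N)%N).
Proof. by move=> k; rewrite addSn. Qed.

Lemma rcvg_sub f (t : nat -> R) l : incr f -> rcvg t l -> rcvg (fun k => t (f k)) l.
Proof.
move=> Hf H e e0; have [N HN] := H e e0; exists N => k Nk.
apply: HN; exact: leq_trans Nk (incr_ge Hf k).
Qed.

Lemma vcvg_sub m f (t : nat -> 'rV[R]_m) l : incr f -> vcvg t l -> vcvg (fun k => t (f k)) l.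
Proof.
move=> Hf H e e0; have [N HN] := H e e0; exists N => k Nk.
apply: HN; exact: leq_trans Nk (incr_ge Hf k).
Qed.

Lemma rdiv_sub f (t : nat -> R) : incr f -> rdiv_pinfty t -> rdiv_pinfty (fun k => t (f k)).
Proof.
move=> Hf H M; have [N HN] := H M; exists N => k Nk.
apply: HN; exact: leq_trans Nk (incr_ge Hf k).
Qed.

Lemma rcvg_cst (c : R) : rcvg (fun _ => c) c.
Proof. by move=> e e0; exists 0%N => k _; rewrite subrr normr0. Qed.

Lemma rcvgD (a b : nat -> R) la lb : rcvg a la -> rcvg b lb ->
  rcvg (fun k => a k + b k) (la + lb).
Proof. by move=> /rcvgE ha /rcvgE hb; apply/rcvgE; apply: cvgD. Qed.

Lemma rcvgN (a : nat -> R) la : rcvg a la -> rcvg (fun k => - a k) (- la).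
Proof. by move=> /rcvgE ha; apply/rcvgE; apply: cvgN. Qed.

Lemma rcvgM (a b : nat -> R) la lb : rcvg a la -> rcvg b lb ->
  rcvg (fun k => a k * b k) (la * lb).
Proof. by move=> /rcvgE ha /rcvgE hb; apply/rcvgE; apply: cvgM. Qed.

Lemma rcvgV (a : nat -> R) la : la != 0 -> rcvg a la -> rcvg (fun k => (a k)^-1) la^-1.
Proof. by move=> h /rcvgE ha; apply/rcvgE; apply: cvgV. Qed.

Lemma rcvg_ext (a b : nat -> R) l : (forall k, a k = b k) -> rcvg a l -> rcvg b l.
Proof. by move=> E H e e0; have [N HN] := H e e0; exists N => k Nk; rewrite -E; apply: HN. Qed.

Lemma vcvg_ext m (a b : nat -> 'rV[R]_m) l : (forall k, a k = b k) -> vcvg a l -> vcvg b l.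
Proof. by move=> E H e e0; have [N HN] := H e e0; exists N => k Nk; rewrite -E; apply: HN. Qed.

Lemma rcvg_uniq_cst (c l : R) : rcvg (fun _ => c) l -> l = c.
Proof.
move=> H; case: (eqVneq l c) => // hne; exfalso.
have h0 : 0 < `|l - c| by rewrite normr_gt0 subr_eq0.
have [N HN] := H _ h0; have := HN N (leqnn N).
by rewrite distrC ltxx.
Qed.

Lemma vcvgD m (a b : nat -> 'rV[R]_m) la lb : vcvg a la -> vcvg b lb ->
  vcvg (fun k => a k + b k) (la + lb).
Proof.
move=> /vcvgP ha /vcvgP hb; apply/vcvgP => i.
rewrite [(la + lb) 0 i]mxE.
apply: rcvg_ext (rcvgD (ha i) (hb i)) => k; by rewrite !mxE.
Qed.

Lemma vcvgN m (a : nat -> 'rV[R]_m) la : vcvg a la -> vcvg (fun k => - a k) (- la).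
Proof.
move=> /vcvgP ha; apply/vcvgP => i.
have := rcvgN (ha i); rewrite mxE; apply: rcvg_ext => k; by rewrite !mxE.
Qed.

Lemma vcvgZ m (s : nat -> R) (a : nat -> 'rV[R]_m) ls la : rcvg s ls -> vcvg a la ->
  vcvg (fun k => s k *: a k) (ls *: la).
Proof.
move=> hs /vcvgP ha; apply/vcvgP => i.
have := rcvgM hs (ha i); rewrite mxE; apply: rcvg_ext => k; by rewrite !mxE.
Qed.

Lemma vcvg_cst m (c : 'rV[R]_m) : vcvg (fun _ => c) c.
Proof. by move=> e e0; exists 0%N => k _; rewrite subrr enorm0. Qed.

Lemma rcvg_enorm m (a : nat -> 'rV[R]_m) l : vcvg a l -> rcvg (fun k => enorm (a k)) (enorm l).
Proof.
move=> /vcvgP ha.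
have hs : rcvg (fun k => dotv (a k) (a k)) (dotv l l).
  apply: rcvg_sum => i; exact: rcvgM.
move/rcvgE: hs => hs; apply/rcvgE.
exact: (continuous_cvg _ (@sqrt_continuous R _) hs).
Qed.

Lemma vcvg_norm0 m (a : nat -> 'rV[R]_m) : rcvg (fun k => enorm (a k)) 0 -> vcvg a 0.
Proof.
move=> H e e0; have [N HN] := H e e0; exists N => k Nk.
have := HN k Nk; rewrite !subr0 ger0_norm //; exact: enorm_ge0.
Qed.

Lemma BWv m (x : nat -> 'rV[R]_m) M : (forall k, enorm (x k) <= M) ->
  exists f, incr f /\ exists l, vcvg (fun k => x (f k)) l.
Proof.
move=> HM.
suff : forall j, (j <= m)%N -> exists f, incr f /\ exists l : 'I_m -> R,
    forall i : 'I_m, (i < j)%N -> rcvg (fun k => x (f k) 0 i) (l i).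
  move=> /(_ m (leqnn m)) [f [hf [l hl]]]; exists f; split => //.
  exists (\row_i l i); apply/vcvgP => i; rewrite mxE; exact: hl.
elim=> [|j IH] hj.
  by exists id; split; [move=> k | exists (fun _ => 0) => i].
have [f [hf [l hl]]] := IH (ltnW hj).
have [g [hg [lj hlj]]] := @BWr (fun k => x (f k) 0 (Ordinal hj)) M
  (fun k => le_trans (coord_le _ _) (HM (f k))).
exists (fun k => f (g k)); split; first exact: incr_comp.
exists (fun i => if (i == Ordinal hj) then lj else l i) => i hi /=.
case: (eqVneq i (Ordinal hj)) => [->|hne]; first by rewrite ?eqxx; exact: hlj.
apply: (rcvg_sub hg (hl i _)).
have hne' : (i : nat) != j by apply: contra hne => /eqP h; apply/eqP/val_inj.
by move: hi; rewrite ltnS leq_eqVlt => /orP[/eqP h|//]; rewrite h eqxx in hne'.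
Qed.

Lemma dotvZ m c (a b : 'rV[R]_m) : dotv (c *: a) b = c * dotv a b.
Proof. rewrite /dotv mulr_sumr; apply: eq_bigr => i _; rewrite mxE; ring. Qed.

Lemma reg_normal_scale n m (Phi : 'rV[R]_n -> set 'rV[R]_m) x y xs ys c :
  0 < c -> reg_normal Phi x y xs ys -> reg_normal Phi x y (c *: xs) (c *: ys).
Proof.
move=> c0 [hP H]; split => // e e0.
have [d [d0 Hd]] := H (e / c) (divr_gt0 e0 c0).
exists d; split => // x' y' hx' hd.
rewrite !dotvZ -mulrDr.
have := Hd x' y' hx' hd => h.
rewrite (_ : e * _ = c * (e / c * pnorm (x' - x) (y' - y))); last first.
  by field; rewrite gt_eqF.

by rewrite ler_pM2l.
Qed.

Lemma rcvg_le (a : nat -> R) l c : (forall k, a k <= c) -> rcvg a l -> l <= c.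
Proof.
move=> ha H; rewrite leNgt; apply/negP => hlc.
have e0 : 0 < l - c by rewrite subr_gt0.
have [N HN] := H _ e0.
have := HN N (leqnn N); have := ha N.
rewrite ltr_norml => h /andP[h1 h2]; lra.
Qed.

Lemma rcvg_ge (a : nat -> R) l c : (forall k, c <= a k) -> rcvg a l -> c <= l.
Proof.
move=> ha H; rewrite leNgt; apply/negP => hlc.
have e0 : 0 < c - l by rewrite subr_gt0.
have [N HN] := H _ e0.
have := HN N (leqnn N); have := ha N.
rewrite ltr_norml => h /andP[h1 h2]; lra.
Qed.

Lemma enorm_gt0 m (v : 'rV[R]_m) : v != 0 -> 0 < enorm v.
Proof.
move=> hv; rewrite lt_def enorm_ge0 andbT; apply/eqP => h.
by move/eqP: hv; apply; apply: enorm_eq0.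
Qed.

Lemma shift_back n (xb x : 'rV[R]_n) : x != xb ->
  xb + enorm (x - xb) *: ((enorm (x - xb))^-1 *: (x - xb)) = x.
Proof.
move=> h; have h0 : enorm (x - xb) != 0.
  by rewrite gt_eqF // enorm_gt0 // subr_eq0.
by rewrite scalerA mulfV // scale1r addrC subrK.
Qed.

Lemma enorm_unit n (v : 'rV[R]_n) : v != 0 -> enorm ((enorm v)^-1 *: v) = 1.
Proof.
move=> h; rewrite enormZ ger0_norm ?invr_ge0 ?enorm_ge0 // mulVf //.
by rewrite gt_eqF // enorm_gt0.
Qed.

Lemma frac_inv (s : R) : 0 < s -> (1 - s / (1 + s)) / (s / (1 + s)) = s^-1.
Proof.
move=> s0; have h1 : 1 + s != 0 by rewrite gt_eqF // ltr_wpDr // ltW.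
field; apply/andP; split => //; rewrite gt_eqF //.
Qed.

Lemma frac_back (s : R) : 0 <= s -> (s / (1 + s)) / (1 - s / (1 + s)) = s.
Proof.
move=> s0; have h1 : 1 + s != 0 by rewrite gt_eqF // ltr_pwDl.
by field; rewrite h1 addrK oner_neq0.
Qed.

Lemma frac_bnd (s : R) : 0 <= s -> `|s / (1 + s)| <= 1.
Proof.
move=> s0; have h1 : 0 < 1 + s by rewrite ltr_pwDl.
rewrite ger0_norm; last by rewrite divr_ge0 // ltW.
rewrite ler_pdivrMr // mul1r; lra.
Qed.

Lemma frac_ge0 (s : R) : 0 <= s -> 0 <= s / (1 + s).
Proof. move=> s0; rewrite divr_ge0 // ltW // ltr_pwDl //. Qed.

Lemma frac_lt1 (s : R) : 0 <= s -> s / (1 + s) < 1.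
Proof.
move=> s0; have h1 : 0 < 1 + s by rewrite ltr_pwDl.
rewrite ltr_pdivrMr // mul1r; lra.
Qed.

Lemma vcvg_dist m (x : nat -> 'rV[R]_m) l : vcvg x l -> rcvg (fun k => enorm (x k - l)) 0.
Proof.
move=> H e e0; have [N HN] := H e e0; exists N => k Nk.
by rewrite subr0 ger0_norm ?enorm_ge0 //; apply: HN.
Qed.

Lemma yeq m (g T Tau : R) (v : 'rV[R]_m) : 0 < T -> 0 < Tau ->
  T `^ g *: ((Tau / T `^ g) *: (Tau^-1 *: v)) = v.
Proof.
move=> T0 Tau0; rewrite !scalerA.
have h1 : T `^ g != 0 by rewrite gt_eqF // powR_gt0.
have h2 : Tau != 0 by rewrite gt_eqF.
rewrite (_ : _ * _ = 1) ?scale1r //; field; by rewrite h1 h2.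
Qed.

Lemma neq1 m (c a : R) (v : 'rV[R]_m) : 0 < c -> 0 < a ->
  - (c^-1 *: (c * a *: (a^-1 *: v))) = - v.
Proof.
move=> c0 a0; rewrite !scalerA.
have h1 : c != 0 by rewrite gt_eqF.
have h2 : a != 0 by rewrite gt_eqF.
rewrite (_ : _ * _ = 1) ?scale1r //; field; by rewrite h1 h2.
Qed.

Lemma neq2 m (c a : R) (v : 'rV[R]_m) : 0 < c -> 0 < a ->
  - (c^-1 *: (a^-1 *: v)) = (c * a)^-1 *: (- v).
Proof.
move=> c0 a0; rewrite !scalerA scalerN invfM mulrC //.
Qed.
End Aux.

Lemma main (R : realType) (n m : nat)
  (Phi : 'rV[R]_n -> set 'rV[R]_m) (xb : 'rV[R]_n) (yb : 'rV[R]_m)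
  (u : 'rV[R]_n) (gamma : R) :
  Phi xb yb -> 1 < gamma ->
  (forall ys, ker (pcoderiv gamma Phi xb yb u 0) ys -> ys = 0) ->
  (forall alpha beta : R, 0 <= alpha -> 0 <= beta ->
     (forall xs, gpcoderiv gamma Phi xb yb u 0 0 xs -> Im_coderiv Phi xb yb xs) /\
     (forall (w : 'rV[R]_m) xs, enorm w = 1 ->
        pcoderiv gamma Phi xb yb u (alpha *: w) (beta *: w) xs ->
        Im_coderiv Phi xb yb xs)) ->
  forall (xk : nat -> 'rV[R]_n) (yk : nat -> 'rV[R]_m) (xsk : nat -> 'rV[R]_n)
         (lk : nat -> 'rV[R]_m) (xs : 'rV[R]_n) (ys : 'rV[R]_m),
    (forall k, 0 < enorm (lk k)) ->
    (forall k, Phi (xk k) (yk k)) ->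
    (forall k, ~ Phi (xk k) yb) ->
    (forall k, yk k <> yb) ->
    (forall k, reg_coderiv Phi (xk k) (yk k) (lk k) (xsk k)) ->
    vcvg xk xb -> vcvg yk yb -> vcvg xsk xs ->
    vcvg (fun k => (enorm (xk k - xb))^-1 *: (xk k - xb)) u ->
    vcvg (fun k => (enorm (xk k - xb))^-1 *: (yk k - yb)) 0 ->
    vcvg (fun k => (enorm (yk k - yb) / enorm (xk k - xb)) *: lk k) ys ->
    vcvg (fun k => (enorm (yk k - yb))^-1 *: (yk k - yb)
                   - (enorm (lk k))^-1 *: lk k) 0 ->
    Im_coderiv Phi xb yb xs.
Proof.
move=> Pb g1 Hker HA xk yk xsk lk xs ys hL HP Hnx Hny Hn Hx Hy Hxs Hu Hv0 Hys Hw.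
have xne : forall k, xk k != xb.
  by move=> k; apply/eqP => e; apply: (Hnx k); rewrite e.
have yne : forall k, yk k - yb != 0 by move=> k; rewrite subr_eq0; apply/eqP.
pose t k := enorm (xk k - xb).
pose tau k := enorm (yk k - yb).
pose L k := enorm (lk k).
have t0 : forall k, 0 < t k by move=> k; rewrite enorm_gt0 // subr_eq0.
have tau0 : forall k, 0 < tau k by move=> k; rewrite enorm_gt0.
pose w k := (tau k)^-1 *: (yk k - yb).
pose r k := tau k / t k `^ gamma.
pose s k := t k `^ (gamma - 1) * L k.
have r0 : forall k, 0 < r k by move=> k; rewrite /r divr_gt0 //; exact: powR_gt0 (t0 k).
have s0 : forall k, 0 < s k.
  by move=> k; apply: mulr_gt0; [exact: powR_gt0 (t0 k)| exact: hL].
have rs : forall k, r k * s k = tau k / t k * L k.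
  move=> k; rewrite /r /s.
  have -> : t k `^ gamma = t k `^ (gamma - 1) * t k.
    rewrite -{3}(powRr1 (ltW (t0 k))) -powRD ?subrK //.
    by apply/implyP => _; rewrite gt_eqF.
  have : t k `^ (gamma - 1) != 0 by rewrite gt_eqF //; exact: powR_gt0 (t0 k).
  have : t k != 0 by rewrite gt_eqF.
  move=> h1 h2; field; by rewrite h1 h2.
have wn : forall k, enorm (w k) = 1 by move=> k; exact: enorm_unit.
have wle : forall k, enorm (w k) <= 1 by move=> k; rewrite wn.
have [f1 [hf1 [w0 Hw0]]] := BWv wle.
have [f2 [hf2 [rho Hrho]]] := BWr (fun k => frac_bnd (ltW (r0 (f1 k)))).
have [f3 [hf3 [sig Hsig]]] := BWr (fun k => frac_bnd (ltW (s0 (f1 (f2 k))))).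
pose phi k := f1 (f2 (f3 k)).
have hphi : incr phi by apply: incr_comp => //; exact: incr_comp.
have Hw0' : vcvg (fun k => w (phi k)) w0.
  exact: (vcvg_sub (incr_comp hf2 hf3) Hw0).
have Hrho' : rcvg (fun k => r (phi k) / (1 + r (phi k))) rho.
  exact: (rcvg_sub hf3 Hrho).
have Hsig' : rcvg (fun k => s (phi k) / (1 + s (phi k))) sig := Hsig.
clear Hw0 Hrho Hsig.
have w0n : enorm w0 = 1.
  apply: rcvg_uniq_cst; apply: rcvg_ext (rcvg_enorm Hw0') => k; exact: wn.
have Hrs : rcvg (fun k => r (phi k) * s (phi k)) (enorm ys).
  apply: rcvg_ext (rcvg_enorm (vcvg_sub hphi Hys)) => k.
  rewrite rs enormZ ger0_norm //; apply: divr_ge0; exact: enorm_ge0.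
have Hxs' := vcvg_sub hphi Hxs.
have Hu' := vcvg_sub hphi Hu.
have Ht' : rcvg (fun k => t (phi k)) 0 := rcvg_sub hphi (vcvg_dist Hx).
have HLw : vcvg (fun k => (L (phi k))^-1 *: lk (phi k)) w0.
  have := vcvgD Hw0' (vcvgN (vcvg_sub hphi Hw)); rewrite oppr0 addr0.
  apply: vcvg_ext => k; rewrite /w /tau /L; by rewrite opprB addrC subrK.
have sig_ge0 : 0 <= sig.
  apply: rcvg_ge Hsig' => k; exact: frac_ge0 (ltW (s0 _)).
have sig_le1 : sig <= 1.
  apply: rcvg_le Hsig' => k; exact: ltW (frac_lt1 (ltW (s0 _))).
have rho_ge0 : 0 <= rho.
  apply: rcvg_ge Hrho' => k; exact: frac_ge0 (ltW (r0 _)).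
have rho_le1 : rho <= 1.
  apply: rcvg_le Hrho' => k; exact: ltW (frac_lt1 (ltW (r0 _))).
have Hpt : forall k, xb + t (phi k) *: ((t (phi k))^-1 *: (xk (phi k) - xb)) = xk (phi k).
  move=> k; exact: shift_back.
have Hun : forall k, enorm ((t (phi k))^-1 *: (xk (phi k) - xb)) = 1.
  by move=> k; apply: enorm_unit; rewrite subr_eq0.
have Hpty : forall k, yb + t (phi k) `^ gamma *: (r (phi k) *: w (phi k)) = yk (phi k).
  by move=> k; rewrite /r /w yeq // addrC subrK.
have [sig1|sign1] := eqVneq sig 1.
  exfalso.
  have sig0 : sig != 0 by rewrite sig1 oner_neq0.
  have Hsinv : rcvg (fun k => (s (phi k))^-1) 0.
    have := rcvgM (rcvgD (rcvg_cst 1) (rcvgN Hsig')) (rcvgV sig0 Hsig').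
    rewrite sig1 subrr mul0r; apply: rcvg_ext => k; exact: frac_inv.
  have Hr0 : rcvg (fun k => r (phi k)) 0.
    have := rcvgM Hrs Hsinv; rewrite mulr0; apply: rcvg_ext => k.
    by rewrite mulrK // unitfE gt_eqF.
  have Hk : ker (pcoderiv gamma Phi xb yb u 0) w0.
    exists (fun k => (t (phi k))^-1 *: (xk (phi k) - xb)),
         (fun k => r (phi k) *: w (phi k)),
         (fun k => t (phi k)),
         (fun k => (s (phi k))^-1 *: xsk (phi k)),
         (fun k => (L (phi k))^-1 *: lk (phi k)).
    split; first exact: Hu'.
    split; first by have := vcvgZ Hr0 Hw0'; rewrite scale0r.
    split; first by move=> k; exact: t0.
    split; first exact: Ht'.
    split; first by have := vcvgZ Hsinv Hxs'; rewrite scale0r.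
    split; first exact: HLw.
    move=> k; have tg : 0 < t (phi k) `^ (gamma - 1) by apply: powR_gt0.
    rewrite Hun mulr1 Hpt Hpty /s neq2 //; last exact: hL.
    apply: reg_normal_scale; last exact: (Hn (phi k)).
    by rewrite invr_gt0; apply: mulr_gt0 => //; exact: hL.
  have := Hker _ Hk => e0; move: w0n; rewrite e0 enorm0 => /eqP; by rewrite eq_sym oner_eq0.
have sig_lt1 : sig < 1 by rewrite lt_neqAle sign1 sig_le1.
have sig1' : 1 - sig != 0 by rewrite subr_eq0 eq_sym.
have Hs : rcvg (fun k => s (phi k)) (sig / (1 - sig)).
  have := rcvgM Hsig' (rcvgV sig1' (rcvgD (rcvg_cst 1) (rcvgN Hsig'))).
  apply: rcvg_ext => k; exact: frac_back (ltW (s0 _)).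
have beta0 : 0 <= sig / (1 - sig) by rewrite divr_ge0 // subr_ge0.
have [rho1|rhon1] := eqVneq rho 1.
  have rho0 : rho != 0 by rewrite rho1 oner_neq0.
  have Hrinv : rcvg (fun k => (r (phi k))^-1) 0.
    have := rcvgM (rcvgD (rcvg_cst 1) (rcvgN Hrho')) (rcvgV rho0 Hrho').
    rewrite rho1 subrr mul0r; apply: rcvg_ext => k; exact: frac_inv.
  have Hs0 : rcvg (fun k => s (phi k)) 0.
    have := rcvgM Hrs Hrinv; rewrite mulr0; apply: rcvg_ext => k.
    by rewrite mulrAC mulfV ?mul1r // gt_eqF.
  apply: ((HA 0 0 (lexx 0) (lexx 0)).1 xs).
  exists (fun k => (t (phi k))^-1 *: (xk (phi k) - xb)),
       (fun k => (t (phi k))^-1 *: (yk (phi k) - yb)),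
       (fun k => t (phi k)),
       (fun k => xsk (phi k)),
       (fun k => t (phi k) `^ (gamma - 1) *: lk (phi k)).
  split; first exact: Hu'.
  split; first exact: (vcvg_sub hphi Hv0).
  split; first by move=> k; exact: t0.
  split; first exact: Ht'.
  split; first exact: Hxs'.
  split.
    apply: vcvg_norm0; apply: rcvg_ext Hs0 => k.
    by rewrite enormZ ger0_norm // powR_ge0.
  move=> k; rewrite Hun mulr1 Hpt.
  rewrite scalerA mulfV ?gt_eqF // scale1r addrC subrK.
  have tg : 0 < t (phi k) `^ (gamma - 1) by apply: powR_gt0.
  rewrite scalerA mulVf ?gt_eqF ?scale1r //.
  exact: (Hn (phi k)).
have rho_lt1 : rho < 1 by rewrite lt_neqAle rhon1 rho_le1.
have rho1' : 1 - rho != 0 by rewrite subr_eq0 eq_sym.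
have Hr : rcvg (fun k => r (phi k)) (rho / (1 - rho)).
  have := rcvgM Hrho' (rcvgV rho1' (rcvgD (rcvg_cst 1) (rcvgN Hrho'))).
  apply: rcvg_ext => k; exact: frac_back (ltW (r0 _)).
have alpha0 : 0 <= rho / (1 - rho) by rewrite divr_ge0 // subr_ge0.
apply: ((HA _ _ alpha0 beta0).2 w0 xs w0n).
exists (fun k => (t (phi k))^-1 *: (xk (phi k) - xb)),
     (fun k => r (phi k) *: w (phi k)),
     (fun k => t (phi k)),
     (fun k => xsk (phi k)),
     (fun k => s (phi k) *: ((L (phi k))^-1 *: lk (phi k))).
split; first exact: Hu'.
split; first exact: vcvgZ Hr Hw0'.
split; first by move=> k; exact: t0.
split; first exact: Ht'.
split; first exact: Hxs'.
split; first exact: vcvgZ Hs HLw.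
move=> k; have tg : 0 < t (phi k) `^ (gamma - 1) by apply: powR_gt0.
rewrite Hun mulr1 Hpt Hpty /s neq1 //; last exact: hL.
exact: (Hn (phi k)).
Qed.

Unset Implicit Arguments.
Theorem theorem5p17 (R : realType) (n m : nat)
  (Phi : 'rV[R]_n -> set 'rV[R]_m) (xb : 'rV[R]_n) (yb : 'rV[R]_m)
  (u : 'rV[R]_n) (gamma : R) :
  closed_graph Phi -> Phi xb yb -> enorm u = 1 -> 1 < gamma ->
  (* A^gamma(u), first part *)
  (forall ys, ker (pcoderiv gamma Phi xb yb u 0) ys -> ys = 0) ->
  (* A^gamma(u), second part *)
  (forall alpha beta : R, 0 <= alpha -> 0 <= beta ->
     (forall xs, gpcoderiv gamma Phi xb yb u 0 0 xs -> Im_coderiv Phi xb yb xs) /\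
     (forall (w : 'rV[R]_m) xs, enorm w = 1 ->
        pcoderiv gamma Phi xb yb u (alpha *: w) (beta *: w) xs ->
        Im_coderiv Phi xb yb xs)) ->
  asymp_regular Phi xb yb u.
Proof.
move=> _ Pb _ g1 Hker HA xk yk xsk lk xs ys HP Hnx Hny Hn Hx Hy Hxs Hu Hv0 Hys HL Hw.
have [N HN] := HL 0.
have hs := incr_shift N.
apply: (main Pb g1 Hker HA (xk := fun k => xk (k + N)%N) (yk := fun k => yk (k + N)%N)
  (xsk := fun k => xsk (k + N)%N) (lk := fun k => lk (k + N)%N) (ys := ys)).
- move=> k; apply: HN; exact: leq_addl.
- by move=> k; apply: HP.
- by move=> k; apply: Hnx.
- by move=> k; apply: Hny.
- by move=> k; apply: Hn.
- exact: vcvg_sub hs Hx.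
- exact: vcvg_sub hs Hy.
- exact: vcvg_sub hs Hxs.
- exact: (vcvg_sub hs Hu).
- exact: (vcvg_sub hs Hv0).
- exact: (vcvg_sub hs Hys).
- exact: (vcvg_sub hs Hw).
Qed.
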